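(* Let $N,\ell$ be sufficiently large positive integers, and suppose $N$ has a prime factor $p$ with $p>2\ell$. Let $m=10\sqrt{\ell}$, let $a$ be an integer, and let $A=\{a,a+1,\ldots,a+m\}$ (the set of integers $a+j$ with $0\le j\le m$). Then $A$ contains an element $b$ such that $b^\ell \not\equiv 1 \pmod N$. *)

(* Defs.v *)
From mathcomp Require Import all_boot all_order all_algebra.
Set Implicit Arguments. Unset Strict Implicit. Unset Printing Implicit Defensive.

(* Main.v *)
Require Import Defs.
From mathcomp Require Import all_boot all_order all_algebra.
From mathcomp Require Import zify ring lra.
Set Implicit Arguments. Unset Strict Implicit. Unset Printing Implicit Defensive.
Import Order.TTheory GRing.Theory Num.Theory.
Local Open Scope ring_scope.

Lemma intr0_dvd (F : fieldType) (p : nat) (z : int) :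
  p \in [pchar F] -> (z%:~R : F) = 0 -> (p %| `|z|)%N.
Proof.
move=> hp; case: z => n /=.
  by move=> h; rewrite (dvdn_pcharf hp) pmulrn h.
rewrite NegzE mulrNz => /eqP; rewrite oppr_eq0 => /eqP h.
by rewrite (dvdn_pcharf hp) pmulrn h.
Qed.

Lemma intr0_small (F : fieldType) (p : nat) (z : int) :
  p \in [pchar F] -> (z%:~R : F) = 0 -> (`|z| < p)%N -> z = 0.
Proof.
move=> hp h hlt; have hd := intr0_dvd hp h.
have : `|z|%N = 0%N.
  by apply/eqP; apply: contraLR hlt; rewrite -leqNgt -lt0n => /(dvdn_leq) ->.
by move/eqP; rewrite absz_eq0 => /eqP.
Qed.

Lemma natr_inj_lt (F : fieldType) (p i j : nat) :
  p \in [pchar F] -> (i < p)%N -> (j < p)%N -> (i%:R : F) = j%:R -> i = j.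
Proof.
move=> hp hi hj h.
have h0 : ((i%:Z - j%:Z)%:~R : F) = 0 by rewrite rmorphB /= -!pmulrn h subrr.
have := intr0_small hp h0.
have -> : (`|i%:Z - j%:Z| < p)%N by lia.
by move=> /(_ isT) /eqP; rewrite subr_eq0 => /eqP [].
Qed.

Lemma roots_card (F : finFieldType) (l : nat) (S : {set F}) :
  (0 < l)%N -> (forall x, x \in S -> x ^+ l = 1) -> (#|S| <= l)%N.
Proof.
move=> hl hS; rewrite cardE; apply: max_unity_roots => //; last exact: enum_uniq.
by apply/allP => x; rewrite mem_enum => /hS hx; rewrite unity_rootE hx.
Qed.

Lemma frob (u v m : nat) (t : int) :
  (0 < u)%N -> (0 < v)%N -> coprime u v -> (u <= m)%N -> (v <= m)%N ->
  - (u%:Z * (m%:Z - v%:Z)) <= t -> t <= v%:Z * m%:Z - u%:Z * (v%:Z - 1) ->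
  exists i j : nat, [/\ (i <= m)%N, (j <= m)%N & t = v%:Z * i%:Z - u%:Z * j%:Z].
Proof.
move=> u0 v0 cuv um vm tlo thi.
have [w [w' hw]] := Bezoutz u v.
have {}hw : w * u%:Z + w' * v%:Z = 1.
  by rewrite hw /gcdz /=; move: cuv; rewrite /coprime => /eqP ->.
pose J : int := if 0 <= t then 0 else ((- t) %/ u%:Z)%Z + 1.
pose X := t + u%:Z * J.
have hJX : [/\ 0 <= J, 0 <= X, J + v%:Z - 1 <= m%:Z & X + u%:Z * (v%:Z - 1) <= v%:Z * m%:Z].
  rewrite /X /J; case: ifP => ht.
    split; lia.
  have hq := divz_eq (- t) u%:Z.
  have hr0 : 0 <= ((- t) %% u%:Z)%Z by apply: modz_ge0; rewrite eqz_nat -lt0n.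
  have hru : ((- t) %% u%:Z)%Z < u%:Z.
    by rewrite -[X in _ < X]gez0_abs ?ltz_mod // ?ler0n // eqz_nat -lt0n.
  move: hq hr0 hru.
  set q := ((- t) %/ u%:Z)%Z; set r := ((- t) %% u%:Z)%Z => hq hr0 hru.
  have hq0 : 0 <= q by nia.
  have hqm : q <= m%:Z - v%:Z by nia.
  split; nia.
case: hJX => hJ0 hX0 hJm hXb.
have hXdef : X = t + u%:Z * J by [].
clearbody X J.
pose k := ((- X * w) %% v%:Z)%Z.
pose q2 := ((- X * w) %/ v%:Z)%Z.
have hk0 : 0 <= k by apply: modz_ge0; rewrite eqz_nat -lt0n.
have hkv : k < v%:Z.
  by rewrite -[X in _ < X]gez0_abs ?ltz_mod // ?ler0n // eqz_nat -lt0n.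
have hkq : - X * w = q2 * v%:Z + k by apply: divz_eq.
pose i := X * w' - u%:Z * q2.
pose j := J + k.
have hvi : v%:Z * i = X + u%:Z * k.
  rewrite /i; have -> : k = - X * w - q2 * v%:Z by rewrite hkq; ring.
  apply/eqP; rewrite -subr_eq0; apply/eqP.
  transitivity (X * (w * u%:Z + w' * v%:Z - 1)); first by ring.
  by rewrite hw subrr mulr0.
have hi0 : 0 <= i by nia.
have him : i <= m%:Z by nia.
have hj0 : 0 <= j by rewrite /j; lia.
have hjm : j <= m%:Z by rewrite /j; lia.
exists `|i|%N, `|j|%N; split.
- by rewrite -lez_nat gez0_abs.
- by rewrite -lez_nat gez0_abs.
- rewrite !gez0_abs //.
  have : v%:Z * i - u%:Z * j = t by rewrite hvi /j hXdef; ring.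
  by move=> <-.
Qed.

Lemma ratio_pow (F : fieldType) (p l m : nat) (A : int) (u v : nat) :
  p \in [pchar F] -> (0 < u)%N -> (0 < v)%N -> coprime u v -> (u <= m)%N -> (v <= m)%N ->
  p%:Z <= v%:Z * m%:Z - u%:Z * (v%:Z - 1) + u%:Z * (m%:Z - v%:Z) + 1 ->
  (forall j, (j <= m)%N -> ((A%:~R : F) + j%:R) ^+ l = 1) ->
  (u%:R : F) ^+ l = (v%:R : F) ^+ l.
Proof.
move=> hp u0 v0 cuv um vm hlen hroot.
have pp := pcharf_prime hp.
have p0 : (0 < p)%N by apply: prime_gt0.
pose lo := - (u%:Z * (m%:Z - v%:Z)).
pose T := (u%:Z - v%:Z) * A.
pose t := lo + ((T - lo) %% p%:Z)%Z.
have hm0 : 0 <= ((T - lo) %% p%:Z)%Z by apply: modz_ge0; rewrite eqz_nat -lt0n.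
have hmp : ((T - lo) %% p%:Z)%Z < p%:Z.
  by rewrite -[X in _ < X]gez0_abs ?ltz_mod // ?ler0n // eqz_nat -lt0n.
have hd := divz_eq (T - lo) p%:Z.
have [i [j [im jm ht]]] : exists i j : nat, [/\ (i <= m)%N, (j <= m)%N & t = v%:Z * i%:Z - u%:Z * j%:Z].
  apply: frob => //; rewrite /t /lo; lia.
have htT : ((t - T)%:~R : F) = 0.
  have -> : t - T = - (((T - lo) %/ p%:Z)%Z * p%:Z).
    by rewrite /t; move: hd; set Q := ((T - lo) %/ p%:Z)%Z; set Rm := ((T - lo) %% p%:Z)%Z; lia.
  by rewrite rmorphN rmorphM /= -[X in _ * X]pmulrn (pcharf0 hp) mulr0 oppr0.
have e : ((v%:Z * i%:Z - u%:Z * j%:Z)%:~R : F) = ((u%:Z - v%:Z) * A)%:~R.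
  by move/eqP: htT; rewrite rmorphB /= subr_eq0 ht => /eqP.
move: e; rewrite !rmorphB !rmorphM /= -!pmulrn => e.
have key : (v%:R : F) * (A%:~R + i%:R) = u%:R * (A%:~R + j%:R).
  apply/eqP; rewrite -subr_eq0; apply/eqP.
  transitivity ((v%:R * i%:R - u%:R * j%:R) - (u%:R - v%:R) * (A%:~R : F)); first by ring.
  by rewrite e rmorphB /= -!pmulrn subrr.
have := congr1 (fun x => x ^+ l) key.
by rewrite !exprMn (hroot i im) (hroot j jm) !mulr1 => ->.
Qed.

Lemma regimeA (F : finFieldType) (p l m : nat) (A : int) :
  p \in [pchar F] -> (0 < l)%N -> (2 * l < p)%N -> (2 * p + 2 * m <= m * m)%N ->
  (forall j, (j <= m)%N -> ((A%:~R : F) + j%:R) ^+ l = 1) -> False.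
Proof.
move=> hp l0 hlp hm hroot.
have pp := pcharf_prime hp.
have p2 := prime_gt1 pp.
pose P (c : nat) := ((c%:R : F) ^+ l == 1).
have [c0 [c0pos c0p c0P]] : exists c, [/\ (0 < c)%N, (c < p)%N & ~~ P c].
  have : ~~ [forall c : 'I_p.-1, P c.+1].
    apply/negP => /forallP hall.
    pose S := [set ((c : nat).+1%:R : F) | c : 'I_p.-1].
    have : (#|S| <= l)%N.
      by apply: roots_card => // x /imsetP [c _ ->]; apply/eqP; exact: hall c.
    rewrite card_imset ?card_ord; first lia.
    move=> c1 c2 /= e; apply: val_inj.
    have h1 : ((c1 : nat).+1 < p)%N by have := ltn_ord c1; lia.
    have h2 : ((c2 : nat).+1 < p)%N by have := ltn_ord c2; lia.
    by have [] := natr_inj_lt hp h1 h2 e.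
  case/forallPn => c hc; exists (c : nat).+1; split => //.
  by have := ltn_ord c; lia.
have exP : exists n, (0 < n)%N && ~~ P n by exists c0; rewrite c0pos.
case: (ex_minnP exP) => n0 /andP [n0pos n0P] n0min.
have hsmall : forall k, (0 < k)%N -> (k < n0)%N -> P k.
  move=> k k0 kn; apply/negPn/negP => hk.
  by have := n0min k; rewrite k0 hk /= => /(_ isT); lia.
have n0p : (n0 < p)%N by have := n0min c0; rewrite c0pos c0P => /(_ isT); lia.
have P1 : P 1%N by rewrite /P expr1n.
have Pmul : forall x y, P x -> P y -> P (x * y)%N.
  by move=> x y; rewrite /P natrM exprMn => /eqP -> /eqP ->; rewrite mulr1.
have n02 : (1 < n0)%N.
  by case: n0 n0pos n0P {n0min hsmall n0p} => [|[|n]] //; rewrite P1.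
have pn0 : prime n0.
  apply/primeP; split => // d /dvdnP [e he].
  apply/negPn/negP; rewrite negb_or => /andP [d1 dn].
  have d0 : (0 < d)%N by case: d he d1 dn => //; rewrite muln0 => h; lia.
  have e0 : (0 < e)%N by case: e he => //; rewrite mul0n => h; lia.
  have e1 : e != 1%N by apply: contraNneq dn => e1; rewrite he e1 mul1n.
  have hd : P d by apply: hsmall => //; nia.
  have hee : P e by apply: hsmall => //; nia.
  by move: n0P; rewrite he (Pmul _ _ hee hd).
have hn0sq : (n0 * (n0 - 1) < p)%N.
  have hps := divn_eq p n0.
  have hs : (p %% n0 < n0)%N by rewrite ltn_pmod.
  have s0 : (p %% n0 != 0)%N.
    apply/negP => /eqP hs0.
    have : (n0 %| p)%N by apply/dvdnP; exists (p %/ n0)%N; rewrite {1}hps hs0 addn0.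
    by case/primeP: pp => _ /(_ n0) hdiv /hdiv /orP [] /eqP h; lia.
  move: hps hs s0; set q := (p %/ n0)%N; set s := (p %% n0)%N => hps hs s0.
  have Pr : P (n0 - s)%N by apply: hsmall; lia.
  have eF : ((q + 1)%N%:R * n0%:R : F) = (n0 - s)%N%:R.
    rewrite -natrM [X in X%:R = _](_ : _ = (p + (n0 - s))%N); last by lia.
    by rewrite natrD (pcharf0 hp) add0r.
  have : (n0 <= q + 1)%N.
    rewrite leqNgt; apply/negP => hq.
    have Pq : P (q + 1)%N by apply: hsmall; lia.
    move: n0P; rewrite /P.
    have := congr1 (fun x => x ^+ l) eF; rewrite /= exprMn (eqP Pq) mul1r (eqP Pr) => ->.
    by rewrite eqxx.
  nia.
have n0m : (n0 <= m)%N by nia.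
pose h := (m %/ 2)%N.
have hh := divn_eq m 2; have hh2 : (m %% 2 < 2)%N by rewrite ltn_pmod.
move: hh hh2; rewrite -/h => hh hh2.
have [y [hy1 hy2 hy3]] : exists y, [/\ ~~ (n0 %| y)%N, (h <= y)%N & (y <= h + 1)%N].
  case hd: (n0 %| h)%N.
    exists h.+1; split => //; last by lia.
    apply/negP => hd1.
    have : (n0 %| 1)%N by rewrite (dvdn_add_eq (n := h)) ?addn1 // -(dvdn_addr _ hd) add0n.
    by rewrite dvdn1 => /eqP h1; lia.
  by exists h; split => //; [rewrite hd | lia].
have cn0y : coprime n0 y by rewrite prime_coprime.
have hA : (n0%:R : F) ^+ l = (y%:R : F) ^+ l.
  apply: (ratio_pow hp) hroot => //; try nia.
have hB : (y%:R : F) ^+ l = ((1%N)%:R : F) ^+ l.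
  apply: (ratio_pow hp) hroot => //; try nia.
  by rewrite coprimen1.
move: n0P; rewrite /P hA hB expr1n eqxx //.
Qed.

Lemma ph (n t : nat) (S : {set 'I_n}) : (0 < t)%N -> (t < #|S|)%N ->
  exists x y : 'I_n, [/\ x \in S, y \in S, (x < y)%N & (y <= x + (n.-1) %/ t)%N].
Proof.
case: t => [//|t] _ tS.
set K := (n.-1 %/ t.+1)%N.
have hK : (n.-1 < t.+1 * K.+1)%N by rewrite mulnC ltn_ceil.
clearbody K.
pose phi (x : 'I_n) : 'I_t.+1 := inord (x %/ K.+1).
have phiE : forall x : 'I_n, (phi x : nat) = (x %/ K.+1)%N.
  move=> x; rewrite inordK // ltn_divLR //.
  move: hK; rewrite -subn1.
  have := ltn_ord x; move: (t.+1 * K.+1)%N => P; lia.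
case: (boolP [forall x in S, forall y in S, (phi x == phi y) ==> (x == y)]).
  move/forallP => hinj.
  have : (#|phi @: S| <= t.+1)%N by rewrite -[X in (_ <= X)%N]card_ord max_card.
  rewrite card_in_imset; first by move=> h; move: tS; rewrite ltnNge h.
  move=> x y xS yS e; apply/eqP.
  by have := hinj x; rewrite xS /= => /forallP /(_ y); rewrite yS e eqxx.
move/forallPn => [x]; rewrite negb_imply => /andP [xS] /forallPn [y].
rewrite negb_imply => /andP [yS]; rewrite negb_imply => /andP [/eqP e xy].
have e' : (x %/ K.+1 = y %/ K.+1)%N by rewrite -!phiE e.
have hx := divn_eq x K.+1; have hy := divn_eq y K.+1.
have rx : (x %% K.+1 < K.+1)%N by rewrite ltn_pmod.
have ry : (y %% K.+1 < K.+1)%N by rewrite ltn_pmod.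
case: (ltngtP x y) => [lxy|lyx|exy].
- exists x, y; split => //; nia.
- exists y, x; split => //; nia.
- by move: xy; rewrite (val_inj exy) eqxx.
Qed.

Definition rf (F : fieldType) (a : F) (n : nat) (x : 'I_n * 'I_n) : F :=
  (a + (x.1 : nat)%:R) / (a + (x.2 : nat)%:R).


Lemma rf_nz (F : fieldType) (l m : nat) (a : F) :
  (0 < l)%N -> (forall j, (j <= m)%N -> (a + j%:R) ^+ l = 1) ->
  forall j, (j <= m)%N -> a + j%:R != 0.
Proof.
move=> l0 hroot j jm; apply/eqP => h; have := hroot j jm.
by rewrite h expr0n (negbTE (lt0n_neq0 l0)) => /eqP; rewrite eq_sym oner_eq0.
Qed.

Lemma rf_eq (F : fieldType) (l m : nat) (a : F) :
  (0 < l)%N -> (forall j, (j <= m)%N -> (a + j%:R) ^+ l = 1) ->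
  forall x : 'I_m.+1 * 'I_m.+1, a + (x.1 : nat)%:R = rf a x * (a + (x.2 : nat)%:R).
Proof.
move=> l0 hroot x; rewrite /rf divfK //; apply: (rf_nz l0 hroot).
by rewrite -ltnS.
Qed.

Lemma rf_root (F : fieldType) (l m : nat) (a : F) :
  (0 < l)%N -> (forall j, (j <= m)%N -> (a + j%:R) ^+ l = 1) ->
  forall x : 'I_m.+1 * 'I_m.+1, rf a x ^+ l = 1.
Proof.
move=> l0 hroot x; rewrite /rf exprMn exprVn !hroot ?invr1 ?mulr1 //; by rewrite -ltnS.
Qed.

Lemma rf_diff (F : fieldType) (l m : nat) (a : F) :
  (0 < l)%N -> (forall j, (j <= m)%N -> (a + j%:R) ^+ l = 1) ->
  forall (v : F) (x y : 'I_m.+1 * 'I_m.+1), rf a x = v -> rf a y = v ->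
  ((((x.1 : nat)%:Z - (y.1 : nat)%:Z))%:~R : F) = v * (((x.2 : nat)%:Z - (y.2 : nat)%:Z))%:~R.
Proof.
move=> l0 hroot v x y hx hy.
have ex := rf_eq l0 hroot x; have ey := rf_eq l0 hroot y.
rewrite hx in ex; rewrite hy in ey.
rewrite !rmorphB /= -!pmulrn.
have -> : ((x.1 : nat)%:R : F) = v * (a + (x.2 : nat)%:R) - a by rewrite -ex; ring.
have -> : ((y.1 : nat)%:R : F) = v * (a + (y.2 : nat)%:R) - a by rewrite -ey; ring.
ring.
Qed.

Lemma rf_col (F : fieldType) (p l m : nat) (a : F) :
  p \in [pchar F] -> (2 * (m * m) < p)%N ->
  (0 < l)%N -> (forall j, (j <= m)%N -> (a + j%:R) ^+ l = 1) ->
  forall (v : F) (x y x' y' : 'I_m.+1 * 'I_m.+1),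
  rf a x = v -> rf a y = v -> rf a x' = v -> rf a y' = v ->
  (((x.1 : nat)%:Z - (y.1 : nat)%:Z) * ((x'.2 : nat)%:Z - (y'.2 : nat)%:Z) =
   ((x'.1 : nat)%:Z - (y'.1 : nat)%:Z) * ((x.2 : nat)%:Z - (y.2 : nat)%:Z)).
Proof.
move=> hp hm l0 hroot v x y x' y' hx hy hx' hy'.
have d1 := rf_diff l0 hroot hx hy; have d2 := rf_diff l0 hroot hx' hy'.
apply/eqP; rewrite -subr_eq0; apply/eqP; apply: (intr0_small hp).
  rewrite rmorphB !rmorphM /= d1 d2; ring.
have := ltn_ord x.1; have := ltn_ord x.2; have := ltn_ord y.1; have := ltn_ord y.2.
have := ltn_ord x'.1; have := ltn_ord x'.2; have := ltn_ord y'.1; have := ltn_ord y'.2.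
move: hm; nia.
Qed.

Lemma m_lt_p (p m : nat) : (2 * (m * m) < p)%N -> (m < p)%N.
Proof. nia. Qed.

Lemma rf_inj2 (F : fieldType) (p l m : nat) (a : F) :
  p \in [pchar F] -> (2 * (m * m) < p)%N ->
  (0 < l)%N -> (forall j, (j <= m)%N -> (a + j%:R) ^+ l = 1) ->
  forall (v : F) (x y : 'I_m.+1 * 'I_m.+1), rf a x = v -> rf a y = v ->
  x.2 = y.2 -> x = y.
Proof.
move=> hp hm l0 hroot v x y hx hy e.
have d := rf_diff l0 hroot hx hy; rewrite e subrr mulr0 in d.
have mp := m_lt_p hm.
have := intr0_small hp d.
have := ltn_ord x.1; have := ltn_ord y.1 => h1 h2.
have -> : (`|(x.1 : nat)%:Z - (y.1 : nat)%:Z| < p)%N by lia.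
move=> /(_ isT) /eqP; rewrite subr_eq0 => /eqP [] e1.
by move: x y e e1 {hx hy d h1 h2} => [x1 x2] [y1 y2] /= -> e1; congr pair; exact: val_inj.
Qed.

Lemma rf_inj1 (F : fieldType) (p l m : nat) (a : F) :
  p \in [pchar F] -> (2 * (m * m) < p)%N ->
  (0 < l)%N -> (forall j, (j <= m)%N -> (a + j%:R) ^+ l = 1) ->
  forall (v : F) (x y : 'I_m.+1 * 'I_m.+1), rf a x = v -> rf a y = v ->
  x.1 = y.1 -> x = y.
Proof.
move=> hp hm l0 hroot v x y hx hy e.
have d := rf_diff l0 hroot hx hy; rewrite e subrr /= in d.
have v0 : v != 0.
  apply/eqP => v0; have := rf_root l0 hroot x; rewrite hx v0 expr0n.
  by rewrite (negbTE (lt0n_neq0 l0)) => /eqP; rewrite eq_sym oner_eq0.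
have d' : ((((x.2 : nat)%:Z - (y.2 : nat)%:Z))%:~R : F) = 0.
  by apply/eqP; move/eqP: d; rewrite eq_sym mulf_eq0 (negbTE v0).
have mp := m_lt_p hm.
have := intr0_small hp d'.
have := ltn_ord x.2; have := ltn_ord y.2 => h1 h2.
have -> : (`|(x.2 : nat)%:Z - (y.2 : nat)%:Z| < p)%N by lia.
move=> /(_ isT) /eqP; rewrite subr_eq0 => /eqP [] e1.
by move: x y e e1 {hx hy d d' h1 h2} => [x1 x2] [y1 y2] /= -> e1; congr pair; exact: val_inj.
Qed.

Definition box_g (F : fieldType) (K : nat) (z : 'I_(2 * K).+1 * 'I_K) : F :=
  (((z.1 : nat)%:Z - K%:Z)%:~R) / ((z.2 : nat).+1)%:R.

Lemma rf_box (F : finFieldType) (p l m : nat) (a : F) :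
  p \in [pchar F] -> (2 * (m * m) < p)%N ->
  (0 < l)%N -> (forall j, (j <= m)%N -> (a + j%:R) ^+ l = 1) ->
  forall (v : F) (K : nat) (x y : 'I_m.+1 * 'I_m.+1), rf a x = v -> rf a y = v ->
  (y.2 : nat) != x.2 ->
  `|(y.1 : nat)%:Z - (x.1 : nat)%:Z| <= K%:Z -> `|(y.2 : nat)%:Z - (x.2 : nat)%:Z| <= K%:Z ->
  v \in [set box_g F z | z in [set: 'I_(2 * K).+1 * 'I_K]].
Proof.
move=> hp hm l0 hroot v K x y hx hy ne hi hj.
have d := rf_diff l0 hroot hy hx.
set di := (y.1 : nat)%:Z - (x.1 : nat)%:Z in d hi.
set dj := (y.2 : nat)%:Z - (x.2 : nat)%:Z in d hj.
have dj0 : dj != 0 by rewrite /dj subr_eq0 eqz_nat.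
pose sg := if 0 < dj then di else - di.
pose rho := `|dj|%N.
have hsr : (sg%:~R : F) = v * rho%:R.
  rewrite /sg /rho; case: ifP => hpos.
    by rewrite d pmulrn gtz0_abs.
  have hneg : dj < 0 by rewrite ltNge le_eqVlt negb_or eq_sym dj0 hpos.
  by rewrite rmorphN /= d pmulrn ltz0_abs // rmorphN /= mulrN.
have rho0 : (0 < rho)%N by rewrite /rho absz_gt0.
have rhoK : (rho <= K)%N by rewrite -lez_nat /rho abszE.
have mp := m_lt_p hm.
have rhop : (rho < p)%N.
  have := ltn_ord x.2; have := ltn_ord y.2; rewrite /rho /dj; lia.
have rhoF : (rho%:R : F) != 0.
  apply/eqP => h; have := natr_inj_lt hp rhop (prime_gt0 (pcharf_prime hp)).
  by rewrite h => /(_ erefl) e; move: rho0; rewrite e.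
have hv : v = sg%:~R / rho%:R by rewrite hsr mulfK.
have hsK : 0 <= sg + K%:Z /\ sg + K%:Z <= (2 * K)%N%:Z.
  by move: hi; rewrite /sg; case: ifP => _; rewrite ?normrN; split; lia.
have h1 : (absz (sg + K%:Z)%R < (2 * K).+1)%N.
  by case: hsK => h0 h2; rewrite ltnS -lez_nat gez0_abs.
have h2 : (rho.-1 < K)%N by lia.
apply/imsetP; exists (Ordinal h1, Ordinal h2); first by rewrite inE.
rewrite /box_g /= prednK // gez0_abs; last by case: hsK.
by rewrite hv addrK.
Qed.

Lemma abs_bound (di dj al be : int) :
  di * be = al * dj -> `|al| <= `|be| -> be != 0 -> `|di| <= `|dj|.
Proof.
move=> col hab b0.
have e := congr1 (fun z => `|z|) col; rewrite /= !normrM in e.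
have bp : 0 < `|be| by rewrite normr_gt0.
by rewrite -(ler_pM2r bp) e mulrC ler_wpM2l.
Qed.

Lemma rf_core (F : finFieldType) (p l m : nat) (a : F) :
  p \in [pchar F] -> (2 * (m * m) < p)%N ->
  (0 < l)%N -> (forall j, (j <= m)%N -> (a + j%:R) ^+ l = 1) ->
  forall (v : F) (t : nat), (0 < t)%N ->
  (t < #|[set x : 'I_m.+1 * 'I_m.+1 | rf a x == v]|)%N ->
  v \in [set box_g F z | z in [set: 'I_(2 * (m %/ t)).+1 * 'I_(m %/ t)]].
Proof.
move=> hp hm l0 hroot v t t0.
set R := [set x | rf a x == v] => tR.
have hR : forall x, x \in R -> rf a x = v by move=> x; rewrite inE => /eqP.
have : (1 < #|R|)%N by lia.
case/card_gt1P => x0 [y0 [x0R y0R nxy]].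
set al := (x0.1 : nat)%:Z - (y0.1 : nat)%:Z.
set be := (x0.2 : nat)%:Z - (y0.2 : nat)%:Z.
have b0 : be != 0.
  apply/negP => /eqP b0; move/negP: nxy; apply; apply/eqP.
  apply: (rf_inj2 hp hm l0 hroot (hR _ x0R) (hR _ y0R)); apply: val_inj.
  by move/eqP: b0; rewrite /be subr_eq0 => /eqP [].
case: (leP `|al| `|be|) => hab.
- pose S := [set x.2 | x in R].
  have cS : #|S| = #|R|.
    by rewrite card_in_imset // => x y xR yR; apply: (rf_inj2 hp hm l0 hroot (hR x xR) (hR y yR)).
  have [j1 [j2 [j1S j2S j12 j21]]] := ph t0 (leq_trans tR (eq_leq (esym cS))).
  case/imsetP: j1S => x xR ex; case/imsetP: j2S => y yR ey.
  have col := rf_col hp hm l0 hroot (hR y yR) (hR x xR) (hR x0 x0R) (hR y0 y0R).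
  rewrite -/al -/be in col.
  apply: (rf_box hp hm l0 hroot (hR x xR) (hR y yR)).
  + by rewrite -ex -ey neq_ltn j12 orbT.
  + apply: le_trans (abs_bound col hab b0) _.
    by move: j12 j21; rewrite ex ey /= => j12 j21; lia.
  + by move: j12 j21; rewrite ex ey /= => j12 j21; lia.
- pose S := [set x.1 | x in R].
  have cS : #|S| = #|R|.
    by rewrite card_in_imset // => x y xR yR; apply: (rf_inj1 hp hm l0 hroot (hR x xR) (hR y yR)).
  have [i1 [i2 [i1S i2S i12 i21]]] := ph t0 (leq_trans tR (eq_leq (esym cS))).
  case/imsetP: i1S => x xR ex; case/imsetP: i2S => y yR ey.
  have col := rf_col hp hm l0 hroot (hR y yR) (hR x xR) (hR x0 x0R) (hR y0 y0R).
  rewrite -/al -/be in col.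
  have a0 : al != 0 by apply/negP => /eqP a0; move: hab; rewrite a0 normr0 ltNge normr_ge0.
  have col' : ((y.2 : nat)%:Z - (x.2 : nat)%:Z) * al = be * ((y.1 : nat)%:Z - (x.1 : nat)%:Z).
    by rewrite mulrC -col mulrC.
  have hdi : `|(y.1 : nat)%:Z - (x.1 : nat)%:Z| <= (m %/ t)%:Z.
    by move: i12 i21; rewrite ex ey /= => i12 i21; lia.
  apply: (rf_box hp hm l0 hroot (hR x xR) (hR y yR)) => //.
  + apply/negP => /eqP e2.
    have exy : x = y.
      apply: (rf_inj2 hp hm l0 hroot (hR x xR) (hR y yR)); exact: val_inj.
    by move: i12; rewrite ex ey exy ltnn.
  + apply: le_trans (abs_bound col' (ltW hab) a0) hdi.
Qed.

Lemma tele_rat (m T : nat) : (7 <= T)%N ->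
  (\sum_(7 <= t < T) ((m %/ t) ^ 2)%N%:R : rat) <= (m ^ 2)%N%:R * (1 / 6 - 1 / (T.-1)%:R).
Proof.
elim: T => [//|T IH] hT.
case: (ltngtP T 6) => hT6; first lia.
- rewrite big_nat_recr /=; last lia.
  have {}IH := IH hT6.
  set k := (m %/ T)%N.
  have hk : (k ^ 2 * (T * T.-1) <= m ^ 2)%N.
    have : (k * T <= m)%N by rewrite leq_divM.
    nia.
  have hT1 : (0 : rat) < (T.-1)%:R by rewrite ltr0n; lia.
  have hT0 : (0 : rat) < T%:R by rewrite ltr0n; lia.
  have hk' : ((k ^ 2)%N%:R : rat) <= (m ^ 2)%N%:R / (T%:R * (T.-1)%:R).
    rewrite ler_pdivlMr ?mulr_gt0 // -!natrM ler_nat; nia.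
  have e : (1 / (T.-1)%:R - 1 / T%:R : rat) = 1 / (T%:R * (T.-1)%:R).
    have hne1 : (T%:R : rat) != 0 by rewrite gt_eqF.
    have hne2 : ((T.-1)%:R : rat) != 0 by rewrite gt_eqF.
    have -> : (T%:R : rat) = (T.-1)%:R + 1.
      by rewrite natr1 prednK //; lia.
    field; rewrite hne2 /= natr1 prednK ?hne1 //; lia.
  apply: le_trans (lerD IH hk') _.
  rewrite /=.
  have -> : (m ^ 2)%N%:R / (T%:R * (T.-1)%:R) = (m ^ 2)%N%:R * (1 / (T.-1)%:R - 1 / T%:R) :> rat.
    by rewrite e mul1r.
  by rewrite -mulrDr addrA subrK.
- by subst T; rewrite big_geq //= subrr mulr0.
Qed.

Lemma tele_nat (m T : nat) : (6 * \sum_(7 <= t < T) (m %/ t) ^ 2 <= m * m)%N.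
Proof.
case: (leqP 7 T) => hT; last by rewrite big_geq ?muln0 //; lia.
have h := tele_rat m hT.
have hY : (0 : rat) <= (m ^ 2)%N%:R * (1 / (T.-1)%:R) by rewrite mulr_ge0 ?divr_ge0.
rewrite mulrBr in h.
have h2 : (6 * \sum_(7 <= t < T) ((m %/ t) ^ 2)%N%:R : rat) <= (m ^ 2)%N%:R by lra.
by move: h2; rewrite -natr_sum -natrM ler_nat mulnn.
Qed.

Lemma sum_lt (r T : nat) : (\sum_(t < T) (t < r)%N)%N = minn r T.
Proof.
elim: T => [|T IH]; first by rewrite big_ord0 minn0.
rewrite big_ord_recr /= IH; case: (ltnP T r) => h /=; lia.
Qed.

Lemma layer (I : finType) (A : {set I}) (r : I -> nat) (T : nat) :
  (forall i, i \in A -> r i <= T)%N ->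
  (\sum_(i in A) r i = \sum_(t < T) #|[set i in A | t < r i]|)%N.
Proof.
move=> hr.
rewrite (eq_bigr (fun i => (\sum_(t < T) (t < r i))%N)); last first.
  by move=> i iA; rewrite sum_lt; apply/esym/minn_idPl; apply: hr.
rewrite exchange_big /=; apply: eq_bigr => t _.
rewrite -sum1_card (eq_bigr (fun i => if (t < r i)%N then 1%N else 0%N)); last first.
  by move=> i _; case: (t < r i)%N.
rewrite -big_mkcondr /=; apply: eq_bigl => i; rewrite !inE.
by [].
Qed.

Lemma regimeB (F : finFieldType) (p l m : nat) (a : F) :
  p \in [pchar F] -> (2 * (m * m) < p)%N -> (0 < l)%N ->
  (forall j, (j <= m)%N -> (a + j%:R) ^+ l = 1) ->
  (2 * (m * m.+1) <= 14 * (l - 1) + m * m)%N.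
Proof.
move=> hp hm l0 hroot.
pose f := @rf F a m.+1.
pose V := f @: [set: 'I_m.+1 * 'I_m.+1].
pose R v := [set x : 'I_m.+1 * 'I_m.+1 | f x == v].
pose W := V :\ 1.
have cV : (#|V| <= l)%N.
  by apply: (roots_card l0) => x /imsetP [y _ ->]; exact: (rf_root l0 hroot).
have fdiag : forall i : 'I_m.+1, f (i, i) = 1.
  move=> i; rewrite /f /rf /= divff //; apply: (rf_nz l0 hroot).
  by rewrite -ltnS.
have V1 : 1 \in V by apply/imsetP; exists (ord0, ord0); rewrite ?inE ?fdiag.
have cW : (#|W| <= l - 1)%N.
  by move: cV; rewrite (cardsD1 1 V) V1 /W /=; move: #|V :\ 1| => k; lia.
have sumV : (\sum_(v in V) #|R v| = m.+1 * m.+1)%N.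
  have : (#|[set: 'I_m.+1 * 'I_m.+1]| = m.+1 * m.+1)%N by rewrite cardsT card_prod card_ord.
  move=> <-; rewrite -sum1_card (partition_big_imset f) /=.
  apply: eq_bigr => v _; rewrite -sum1_card; apply: eq_bigl => x.
  by rewrite !inE.
have R1 : #|R 1| = m.+1.
  have -> : R 1 = [set (i, i) | i : 'I_m.+1].
    apply/setP => x; rewrite !inE; apply/eqP/imsetP.
      move=> hx; exists x.2 => //.
      apply: (rf_inj2 hp hm l0 hroot hx (fdiag x.2)) => //.
    by case=> i _ ->; rewrite fdiag.
  by rewrite card_imset ?card_ord // => i j [].
have sumW : (\sum_(v in W) #|R v| = m.+1 * m.+1 - m.+1)%N.
  by move: sumV; rewrite (bigD1 1 V1) /= R1 => <-; rewrite addKn; apply: eq_bigl => v; rewrite !inE andbC.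
pose T := (m.+1 * m.+1 + 7)%N.
have hlay := @layer _ W (fun v => #|R v|) T.
rewrite sumW in hlay.
pose N t := #|[set v in W | (t < #|R v|)%N]|.
have {}hlay : (m.+1 * m.+1 - m.+1 = \sum_(t < T) N t)%N.
  apply: hlay => v _; apply: leq_trans (max_card _) _.
  by rewrite card_prod card_ord /T; lia.
have hN0 : forall t, (N t <= #|W|)%N.
  move=> t; apply: subset_leq_card; apply/subsetP => v; rewrite inE => /andP [].
  by [].
have hNt : forall t, (0 < t)%N -> (N t <= 3 * (m %/ t) ^ 2)%N.
  move=> t t0.
  set K := (m %/ t)%N.
  have : (N t <= #|[set box_g F z | z in [set: 'I_(2 * K).+1 * 'I_K]]|)%N.
    apply: subset_leq_card; apply/subsetP => v; rewrite inE => /andP [_ hv].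
    exact: (rf_core hp hm l0 hroot t0 hv).
  move=> h; apply: leq_trans h _; apply: leq_trans (leq_imset_card _ _) _.
  rewrite cardsT card_prod !card_ord; nia.
have hT7 : (7 <= T)%N by rewrite /T; lia.
clearbody T N.
have hsplit : (\sum_(t < T) N t = \sum_(0 <= t < 7) N t + \sum_(7 <= t < T) N t)%N.
  by rewrite -(big_mkord xpredT) (big_cat_nat _ (n := 7)).
have h1 : (\sum_(0 <= t < 7) N t <= 7 * #|W|)%N.
  have : (\sum_(0 <= t < 7) N t <= \sum_(0 <= t < 7) #|W|)%N.
    by apply: leq_sum => t _; exact: hN0.
  by rewrite sum_nat_const_nat.
have h2 : (\sum_(7 <= t < T) N t <= 3 * \sum_(7 <= t < T) (m %/ t) ^ 2)%N.
  rewrite big_distrr /=; rewrite !big_nat; apply: leq_sum => t /andP [ht _].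
  by apply: hNt; lia.
have h3 := tele_nat m T.
move: hlay; rewrite hsplit => hl.
nia.
Qed.

Lemma isqrt_ex (n : nat) : exists m, (m * m <= n < m.+1 * m.+1)%N.
Proof.
elim: n => [|n [m /andP [h1 h2]]]; first by exists 0%N.
case: (leqP (m.+1 * m.+1) n.+1) => h.
  by exists m.+1; apply/andP; split => //; nia.
by exists m; apply/andP; split => //; lia.
Qed.

Lemma modN_to_F (N p l : nat) (x : int) :
  prime p -> (p %| N)%N -> (x == 1 %[mod N%:Z])%Z -> (x%:~R : 'F_p) = 1.
Proof.
move=> pp pN; rewrite eqz_mod_dvd => hd.
have hp := pchar_Fp pp.
have : (p%:Z %| x - 1)%Z by by apply: dvdz_trans hd; rewrite dvdzE.
case/dvdzP => k hk.
apply/eqP; rewrite -subr_eq0; apply/eqP.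
have -> : (x%:~R : 'F_p) - 1 = (x - 1)%:~R by rewrite rmorphB.
by rewrite hk rmorphM /= -[X in _ * X]pmulrn (pcharf0 hp) mulr0.
Qed.

Theorem claim2p5 :
  exists N0 L0 : nat,
    forall (N l p : nat) (a : int),
      (N0 <= N)%N -> (L0 <= l)%N ->
      prime p -> (p %| N)%N -> (2 * l < p)%N ->
      exists j : nat,
        (j * j <= 100 * l)%N /\
        ((a + j%:Z) ^+ l != 1 %[mod N%:Z])%Z.
Proof.
exists 0%N, 1%N => N l p a _ l1 pp pN hlp.
have [m /andP [hm1 hm2]] := isqrt_ex (100 * l).
case: (boolP [exists j : 'I_m.+1, ((a + (j : nat)%:Z) ^+ l != 1 %[mod N%:Z])%Z]).
  case/existsP => j hj; exists j; split => //.
  apply: leq_trans hm1; have := ltn_ord j; rewrite ltnS => hj'; exact: leq_mul.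
move=> hall; exfalso.
have hp := pchar_Fp pp.
have l0 : (0 < l)%N by lia.
have hroot : forall j, (j <= m)%N -> (((a%:~R : 'F_p) + j%:R) ^+ l = 1).
  move=> j jm.
  have jm' : (j < m.+1)%N by [].
  move/existsPn: hall => /(_ (Ordinal jm')) /negPn /= h.
  have := modN_to_F l pp pN h.
  by rewrite rmorphXn rmorphD /= -pmulrn.
case: (leqP (2 * p + 2 * m) (m * m)) => hreg.
  exact: (regimeA hp l0 hlp hreg hroot).
pose m' := (m %/ 2).-1.
have hh := divn_eq m 2; have hh2 : (m %% 2 < 2)%N by rewrite ltn_pmod.
have hm'1 : (m <= 2 * m' + 3)%N by rewrite /m'; lia.
have hm'2 : (2 * (m' * m') < p)%N.
  case: (leqP 2 m) => m2.
    have h1 : (2 * m' + 2 <= m)%N by rewrite /m'; lia.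
    clearbody m'.
    have h2 : ((2 * m' + 2) * (2 * m' + 2) <= m * m)%N by apply: leq_mul.
    have e : ((2 * m' + 2) * (2 * m' + 2) = 4 * (m' * m') + 8 * m' + 4)%N by ring.
    have p0 := prime_gt0 pp.
    have hS : ((0 < m') || (m' * m' == 0))%N by case: m' {h1 h2 e hm'1 hroot} => // n; rewrite muln0.
    rewrite e in h2; move: h2 hreg hm'1 p0 hS; move: (m' * m')%N (m * m)%N => S M; lia.
  have -> : m' = 0%N by rewrite /m'; lia.
  by rewrite muln0 prime_gt0.
have hroot' : forall j, (j <= m')%N -> (((a%:~R : 'F_p) + j%:R) ^+ l = 1).
  by move=> j jm; apply: hroot; rewrite /m'; lia.
have := regimeB hp hm'2 l0 hroot'.
clearbody m' => h.
have h1 : (m.+1 * m.+1 <= (2 * m' + 4) * (2 * m' + 4))%N by apply: leq_mul; lia.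
have e1 : ((2 * m' + 4) * (2 * m' + 4) = 4 * (m' * m') + 16 * m' + 16)%N by ring.
have e2 : (m' * m'.+1 = m' * m' + m')%N by ring.
have hsq : (m' <= m' * m' + 1)%N by case: m' {h h1 e1 e2 hm'1 hm'2 hroot'} => // n; nia.
rewrite e1 in h1; rewrite e2 in h.
move: h h1 hsq hm2 l0; move: (m' * m')%N (m.+1 * m.+1)%N => S M; lia.
Qed.
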